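(* Let $\mathcal{K}=(\mathcal{R},\mathcal{T})$ be an ME-consistent $\mathcal{ALCP}$ knowledge base over $\mathcal{L}$, $C,D$ concepts and $\kappa\in\mathcal{L}$ with $P^{ME}_{\mathcal{R}}(\kappa)>0$. For every $\mathcal{ALCP}$-model $\mathcal{P}$ of $\mathcal{K}$ there exist pithy $\mathcal{ALCP}$-models $\mathcal{Q}_1,\mathcal{Q}_2$ of $\mathcal{K}$ such that $\Pr_{\mathcal{Q}_1}(C\sqsubseteq D\mid\kappa)\le\Pr_{\mathcal{P}}(C\sqsubseteq D\mid\kappa)\le\Pr_{\mathcal{Q}_2}(C\sqsubseteq D\mid\kappa)$ and $P^{\mathcal{P}}=P^{\mathcal{Q}_1}=P^{\mathcal{Q}_2}$.
   Context: $\mathcal{L}$ is a propositional language over a finite set of variables; $\mathrm{Int}(\mathcal{L})$ is the set of truth assignments. A probability distribution over $\mathcal{L}$ is $P:\mathrm{Int}(\mathcal{L})\to[0,1]$ summing to $1$, with $P(\phi)=\sum_{v\models\phi}P(v)$. A probabilistic constraint is $c_0+\sum_{i=1}^k c_i\,\mathsf{p}(\phi_i)\ge 0$ ($c_i\in\mathbb{R}$, $\phi_i\in\mathcal{L}$), satisfied by $P$ iff $c_0+\sum_ic_iP(\phi_i)\ge0$; $\mathrm{Mod}(\mathcal{R})$ is the set of distributions satisfying all constraints in $\mathcal{R}$; for consistent $\mathcal{R}$, $P^{ME}_{\mathcal{R}}$ is the unique maximizer in $\mathrm{Mod}(\mathcal{R})$ of $H(P)=-\sum_vP(v)\log P(v)$.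 Concepts: $C::=A\mid\neg C\mid C\sqcap C\mid\exists r.C$. An $\mathcal{L}$-GCI is $\langle C\sqsubseteq D:\kappa\rangle$, $\kappa\in\mathcal{L}$; an $\mathcal{L}$-TBox is a finite set of them; a KB is $\mathcal{K}=(\mathcal{R},\mathcal{T})$. A possible world $\mathcal{I}=(\Delta^{\mathcal{I}},\cdot^{\mathcal{I}},v^{\mathcal{I}})$ is a classical $\mathcal{ALC}$ interpretation together with $v^{\mathcal{I}}\in\mathrm{Int}(\mathcal{L})$; it models $\langle C\sqsubseteq D:\kappa\rangle$ iff $v^{\mathcal{I}}\not\models\kappa$ or $C^{\mathcal{I}}\subseteq D^{\mathcal{I}}$. An $\mathcal{ALCP}$-interpretation $\mathcal{P}=(\mathfrak{I},P_{\mathfrak{I}})$ is a nonempty finite set of possible worlds with a probability distribution on it; $P^{\mathcal{P}}(v)=\sum_{\mathcal{I}\in\mathfrak{I},v^{\mathcal{I}}=v}P_{\mathfrak{I}}(\mathcal{I})$. $\mathcal{P}$ is an $\mathcal{ALCP}$-model of $\mathcal{K}$ iff all its worlds model every GCI of $\mathcal{T}$ and $P^{\mathcal{P}}\in\mathrm{Mod}(\mathcal{R})$; it is an ME-$\mathcal{ALCP}$-model if moreover $P^{\mathcal{P}}=P^{ME}_{\mathcal{R}}$; $\mathcal{K}$ is ME-consistent iff an ME-$\mathcal{ALCP}$-model exists. $\mathcal{P}$ is pithy iff for every $w\in\mathrm{Int}(\mathcal{L})$ there is at most one $\mathcal{I}\in\mathfrak{I}$ with $v^{\mathcal{I}}=w$.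 $\Pr_{\mathcal{P}}(C\sqsubseteq D\mid\kappa)=\big(\sum_{\mathcal{I}\in\mathfrak{I},v^{\mathcal{I}}\models\kappa,C^{\mathcal{I}}\subseteq D^{\mathcal{I}}}P_{\mathfrak{I}}(\mathcal{I})\big)/\big(\sum_{\mathcal{I}\in\mathfrak{I},v^{\mathcal{I}}\models\kappa}P_{\mathfrak{I}}(\mathcal{I})\big)$. *)

(* Defs.v *)
From HB Require Import structures.
From mathcomp Require Import all_boot all_order all_algebra.
From mathcomp Require Import boolp reals exp.
From Stdlib Require List.
Set Implicit Arguments. Unset Strict Implicit. Unset Printing Implicit Defensive.
Import Order.TTheory GRing.Theory Num.Theory.
Local Open Scope ring_scope.

Inductive pform (V : Type) : Type :=
| FVar of V
| FTop
| FNot of pform V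
| FAnd of pform V & pform V
| FOr of pform V & pform V.

Definition assign (V : finType) := {ffun V -> bool}.

Fixpoint fsat (V : finType) (v : assign V) (phi : pform V) : bool :=
  match phi with
  | FVar x => v x
  | FTop => true
  | FNot p => ~~ fsat v p
  | FAnd p q => fsat v p && fsat v q
  | FOr p q => fsat v p || fsat v q
  end.

Definition is_distr (R : realType) (V : finType) (P : {ffun assign V -> R}) : Prop :=
  (forall v, 0 <= P v) /\ \sum_(v : assign V) P v = 1.

Definition fprob (R : realType) (V : finType) (P : {ffun assign V -> R}) (phi : pform V) : R :=
  \sum_(v : assign V | fsat v phi) P v.

Record pconstr (R : realType) (V : finType) := PConstr {
  pc_c0 : R;
  pc_terms : seq (R * pform V) }.

Definition sat_constr (R : realType) (V : finType) (P : {ffun assign V -> R})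
  (c : pconstr R V) : Prop :=
  0 <= pc_c0 c + \sum_(t <- pc_terms c) t.1 * fprob P t.2.

Definition Mod (R : realType) (V : finType) (Rs : seq (pconstr R V))
  (P : {ffun assign V -> R}) : Prop :=
  is_distr P /\ forall c, List.In c Rs -> sat_constr P c.

Definition entropy (R : realType) (V : finType) (P : {ffun assign V -> R}) : R :=
  - \sum_(v : assign V) (if P v == 0 then 0 else P v * ln (P v)).

Definition is_ME (R : realType) (V : finType) (Rs : seq (pconstr R V))
  (P : {ffun assign V -> R}) : Prop :=
  Mod Rs P /\ forall Q, Mod Rs Q -> entropy Q <= entropy P.

Inductive concept (CN RN : Type) : Type :=
| CAtom of CN
| CNeg of concept CN RN
| CAnd of concept CN RN & concept CN RN
| CEx of RN & concept CN RN.

Record gci (CN RN : Type) (V : Type) := GCI {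
  gci_C : concept CN RN; gci_D : concept CN RN; gci_ctx : pform V }.

Definition tbox (CN RN V : Type) := seq (gci CN RN V).

Record world (CN RN : Type) (V : finType) := World {
  wdom : Type;
  wdom_elt : wdom;                         (* nonempty domain *)
  wconc : CN -> wdom -> Prop;
  wrole : RN -> wdom -> wdom -> Prop;
  wval : assign V }.

Fixpoint cext (CN RN : Type) (V : finType) (I : world CN RN V)
  (C : concept CN RN) : wdom I -> Prop :=
  match C with
  | CAtom A => @wconc CN RN V I A
  | CNeg C' => fun x => ~ cext C' x
  | CAnd C1 C2 => fun x => cext C1 x /\ cext C2 x
  | CEx r C' => fun x => exists y, @wrole CN RN V I r x y /\ cext C' y
  end.
Arguments cext {CN RN V} I C _.

Definition subsumes (CN RN : Type) (V : finType) (I : world CN RN V)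
  (C D : concept CN RN) : Prop :=
  forall x, cext I C x -> cext I D x.

Definition world_models_gci (CN RN : Type) (V : finType) (I : world CN RN V)
  (g : gci CN RN V) : Prop :=
  ~~ fsat (wval I) (gci_ctx g) \/ subsumes I (gci_C g) (gci_D g).

Record alcp_interp (R : realType) (CN RN : Type) (V : finType) := ALCPInterp {
  aidx : finType;
  aworld : aidx -> world CN RN V;
  apr : aidx -> R;
  aidx_nonempty : (0 < #|aidx|)%N;
  apr_ge0 : forall i, 0 <= apr i;
  apr_sum1 : \sum_(i : aidx) apr i = 1 }.

Definition adistr (R : realType) (CN RN : Type) (V : finType)
  (P : alcp_interp R CN RN V) : {ffun assign V -> R} :=
  [ffun w => \sum_(i : aidx P | wval (aworld i) == w) apr i].

Record kb (R : realType) (CN RN : Type) (V : finType) := KB {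
  kb_R : seq (pconstr R V);
  kb_T : tbox CN RN V }.

Definition alcp_model (R : realType) (CN RN : Type) (V : finType)
  (K : kb R CN RN V) (P : alcp_interp R CN RN V) : Prop :=
  (forall (i : aidx P) g, List.In g (kb_T K) -> world_models_gci (aworld i) g) /\
  Mod (kb_R K) (adistr P).

Definition me_alcp_model (R : realType) (CN RN : Type) (V : finType)
  (K : kb R CN RN V) (P : alcp_interp R CN RN V) : Prop :=
  alcp_model K P /\ is_ME (kb_R K) (adistr P).

Definition ME_consistent (R : realType) (CN RN : Type) (V : finType)
  (K : kb R CN RN V) : Prop :=
  exists P, me_alcp_model K P.

Definition pithy (R : realType) (CN RN : Type) (V : finType)
  (P : alcp_interp R CN RN V) : Prop :=
  forall i j : aidx P, wval (aworld i) = wval (aworld j) -> i = j.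

Definition cprob (R : realType) (CN RN : Type) (V : finType)
  (P : alcp_interp R CN RN V) (C D : concept CN RN) (kappa : pform V) : R :=
  (\sum_(i : aidx P | fsat (wval (aworld i)) kappa &&
                      `[< subsumes (aworld i) C D >]) apr i) /
  (\sum_(i : aidx P | fsat (wval (aworld i)) kappa) apr i).

(* Main.v *)
Require Import Defs.
From mathcomp Require Import all_boot all_order all_algebra.
From mathcomp Require Import boolp reals exp.
Import Order.TTheory GRing.Theory Num.Theory.
Local Open Scope ring_scope.
Set Implicit Arguments. Unset Strict Implicit.

Definition hasw (R : realType) (CN RN : Type) (V : finType)
  (P : alcp_interp R CN RN V) (w : assign V) : bool :=
  [exists i : aidx P, wval (aworld i) == w].

Definition rep (R : realType) (CN RN : Type) (V : finType)
  (P : alcp_interp R CN RN V) (b : pred (aidx P)) (i0 : aidx P) (w : assign V)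
  : aidx P :=
  match [pick i | (wval (aworld i) == w) && b i] with
  | Some j => j
  | None => match [pick i | wval (aworld i) == w] with Some j => j | None => i0 end
  end.

Lemma rep_val (R : realType) (CN RN : Type) (V : finType)
  (P : alcp_interp R CN RN V) (b : pred (aidx P)) (i0 : aidx P) w :
  hasw P w -> wval (aworld (rep b i0 w)) = w.
Proof.
move=> /existsP [i /eqP Hi]; rewrite /rep.
case: pickP => [j /andP [/eqP -> _] //|_].
case: pickP => [j /eqP -> //|H]; by move: (H i); rewrite Hi eqxx.
Qed.

Lemma rep_b (R : realType) (CN RN : Type) (V : finType)
  (P : alcp_interp R CN RN V) (b : pred (aidx P)) (i0 : aidx P) w i :
  wval (aworld i) = w -> b i -> b (rep b i0 w).
Proof.
move=> Hi Hb; rewrite /rep.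
case: pickP => [j /andP [_ ->] //|H]; by move: (H i); rewrite Hi eqxx Hb.
Qed.

Lemma adistr_ge0 (R : realType) (CN RN : Type) (V : finType)
  (P : alcp_interp R CN RN V) w : 0 <= adistr P w.
Proof. rewrite ffunE; apply: sumr_ge0 => i _; exact: apr_ge0. Qed.

Lemma adistr_nohas (R : realType) (CN RN : Type) (V : finType)
  (P : alcp_interp R CN RN V) w : ~~ hasw P w -> adistr P w = 0.
Proof.
move=> /existsPn H; rewrite ffunE big1 // => i Hi; by move: (H i); rewrite Hi.
Qed.

Definition Qidx (R : realType) (CN RN : Type) (V : finType)
  (P : alcp_interp R CN RN V) : finType := {x in hasw P}.

Lemma Qnonempty (R : realType) (CN RN : Type) (V : finType)
  (P : alcp_interp R CN RN V) (i0 : aidx P) : (0 < #|Qidx P|)%N.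
Proof.
apply/card_gt0P.
have H : wval (aworld i0) \in hasw P by apply/existsP; exists i0.
by exists (exist (fun x => x \in hasw P) _ H).
Qed.

Lemma Qge0 (R : realType) (CN RN : Type) (V : finType)
  (P : alcp_interp R CN RN V) (i : Qidx P) : 0 <= adistr P (val i).
Proof. exact: adistr_ge0. Qed.

Lemma sum_adistr (R : realType) (CN RN : Type) (V : finType)
  (P : alcp_interp R CN RN V) : \sum_w adistr P w = 1.
Proof.
rewrite -(apr_sum1 P) (partition_big (fun i => wval (aworld i)) predT) //=.
by apply: eq_bigr => w _; rewrite ffunE.
Qed.

Lemma Qsum1 (R : realType) (CN RN : Type) (V : finType)
  (P : alcp_interp R CN RN V) : \sum_(i : Qidx P) adistr P (val i) = 1.
Proof.
rewrite /Qidx -(big_sub (hasw P) (fun w => adistr P w)) -(sum_adistr P).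
rewrite [RHS](bigID (hasw P)) /= [X in _ = _ + X]big1 ?addr0 //.
move=> w Hw; exact: adistr_nohas.
Qed.

Definition Qint (R : realType) (CN RN : Type) (V : finType)
  (P : alcp_interp R CN RN V) (b : pred (aidx P)) (i0 : aidx P)
  : alcp_interp R CN RN V :=
  @ALCPInterp R CN RN V (Qidx P) (fun x => aworld (rep b i0 (val x)))
    (fun x => adistr P (val x)) (Qnonempty i0) (@Qge0 R CN RN V P) (@Qsum1 R CN RN V P).

Lemma Q_sub (R : realType) (CN RN : Type) (V : finType)
  (P : alcp_interp R CN RN V) (b : pred (aidx P)) (i0 : aidx P)
  (h : assign V -> aidx P -> bool) :
  \sum_(x : aidx (Qint b i0) | h (wval (aworld x)) (rep b i0 (val x))) apr x
  = \sum_(w in hasw P | h w (rep b i0 w)) adistr P w.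
Proof.
rewrite [RHS]big_sub_cond /=; apply: eq_bigl => x.
by rewrite rep_val //; exact: valP.
Qed.

Lemma partW (R : realType) (CN RN : Type) (V : finType)
  (X : alcp_interp R CN RN V) (kappa : pform V) (g : pred (aidx X)) :
  \sum_(i | fsat (wval (aworld i)) kappa && g i) apr i =
  \sum_(w | fsat w kappa) \sum_(i | (wval (aworld i) == w) && g i) apr i.
Proof.
rewrite (partition_big (fun i => wval (aworld i)) (fun w => fsat w kappa)) /=;
  last by move=> i /andP [].
apply: eq_bigr => w Hw; apply: eq_bigl => i.
by case: eqP => [->|]; rewrite ?Hw ?andbF //= andbC.
Qed.

Lemma denW (R : realType) (CN RN : Type) (V : finType)
  (X : alcp_interp R CN RN V) (kappa : pform V) :
  \sum_(i : aidx X | fsat (wval (aworld i)) kappa) apr i =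
  \sum_(w | fsat w kappa) adistr X w.
Proof.
rewrite (eq_bigl (fun i => fsat (wval (aworld i)) kappa && predT i)); last first.
  by move=> i; rewrite andbT.
rewrite partW; apply: eq_bigr => w _.
by rewrite ffunE; apply: eq_bigl => i; rewrite andbT.
Qed.

Lemma build (R : realType) (CN RN : Type) (V : finType)
  (K : kb R CN RN V) (P : alcp_interp R CN RN V) (b : pred (aidx P)) (i0 : aidx P) :
  alcp_model K P ->
  alcp_model K (Qint b i0) /\ pithy (Qint b i0) /\ adistr P = adistr (Qint b i0).
Proof.
move=> [HT HM].
have Ead : adistr P = adistr (Qint b i0).
  apply/ffunP => w; rewrite !ffunE.
  have E := Q_sub b i0 (fun w' _ => w' == w); simpl in E; rewrite E; clear E.
  case Hw: (hasw P w).
    rewrite (big_pred1 w); first by rewrite ffunE.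
    by move=> v /=; case: eqP => [->|]; rewrite ?andbT ?andbF.
  rewrite [RHS]big1; last first.
    move=> v /andP [Hv /eqP Hvw].
    have: hasw P w by rewrite -Hvw.
    by rewrite Hw.
  transitivity (adistr P w); first by rewrite ffunE.
  by rewrite adistr_nohas ?Hw.
split; last split => //.
  split; first by move=> i g Hg; exact: HT.
  by rewrite -Ead.
move=> x y /= Hxy; apply: val_inj.
by rewrite -(rep_val b i0 (valP x)) -(rep_val b i0 (valP y)).
Qed.

Lemma num_Q (R : realType) (CN RN : Type) (V : finType)
  (P : alcp_interp R CN RN V) (b : pred (aidx P)) (i0 : aidx P)
  (kappa : pform V) (C D : concept CN RN) :
  \sum_(x : aidx (Qint b i0) | fsat (wval (aworld x)) kappa &&
       `[< subsumes (aworld x) C D >]) apr x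
  = \sum_(w | fsat w kappa)
      (if hasw P w && `[< subsumes (aworld (rep b i0 w)) C D >]
       then adistr P w else 0).
Proof.
have E := Q_sub b i0 (fun w j => fsat w kappa && `[< subsumes (aworld j) C D >]).
simpl in E; rewrite E; clear E.
rewrite big_mkcond [RHS]big_mkcond; apply: eq_bigr => w _.
have -> : (w \in hasw P) = hasw P w by [].
by case: (fsat w kappa); case: (hasw P w).
Qed.

Lemma num_P (R : realType) (CN RN : Type) (V : finType)
  (P : alcp_interp R CN RN V) (kappa : pform V) (C D : concept CN RN) :
  \sum_(i : aidx P | fsat (wval (aworld i)) kappa &&
       `[< subsumes (aworld i) C D >]) apr i
  = \sum_(w | fsat w kappa)
      \sum_(i : aidx P | (wval (aworld i) == w) && `[< subsumes (aworld i) C D >]) apr i.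
Proof. exact: partW. Qed.

Lemma cmp_div (R : realType) (a b d : R) : a <= b -> 0 <= d -> a / d <= b / d.
Proof. move=> Hab Hd; apply: ler_wpM2r => //; by rewrite invr_ge0. Qed.

Theorem lemma1 (R : realType) (CN RN : Type) (V : finType)
  (K : kb R CN RN V) (C D : concept CN RN) (kappa : pform V) :
  ME_consistent K ->
  (forall PME, is_ME (kb_R K) PME -> 0 < fprob PME kappa) ->
  forall P : alcp_interp R CN RN V, alcp_model K P ->
  exists Q1 Q2 : alcp_interp R CN RN V,
    alcp_model K Q1 /\ alcp_model K Q2 /\ pithy Q1 /\ pithy Q2 /\
    cprob Q1 C D kappa <= cprob P C D kappa <= cprob Q2 C D kappa /\
    adistr P = adistr Q1 /\ adistr P = adistr Q2.
Proof.
move=> _ _ P HP.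
have [i0 _] : exists i0 : aidx P, true.
  by case/card_gt0P: (aidx_nonempty P) => i _; exists i.
pose s := fun i : aidx P => `[< subsumes (aworld i) C D >].
pose b1 := fun i => ~~ s i.
have [M1 [Pi1 E1]] := build b1 i0 HP.
have [M2 [Pi2 E2]] := build s i0 HP.
exists (Qint b1 i0), (Qint s i0); do 4 (split; first by []); split; last by split.
have Hden : forall X : alcp_interp R CN RN V, adistr P = adistr X ->
  \sum_(i : aidx X | fsat (wval (aworld i)) kappa) apr i =
  \sum_(i : aidx P | fsat (wval (aworld i)) kappa) apr i.
  by move=> X EX; rewrite !denW EX.
have d0 : 0 <= \sum_(i : aidx P | fsat (wval (aworld i)) kappa) apr i.
  by apply: sumr_ge0 => i _; exact: apr_ge0.
rewrite /cprob (Hden _ E1) (Hden _ E2); apply/andP; split; apply: cmp_div => //;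
  rewrite num_Q num_P; apply: ler_sum => w _.
- case H: (hasw P w && `[< subsumes (aworld (rep b1 i0 w)) C D >]); last first.
    by apply: sumr_ge0 => i _; exact: apr_ge0.
  move/andP: H => [_ Hs].
  rewrite ffunE le_eqVlt; apply/orP; left; apply/eqP; apply: eq_bigl => i.
  case: (eqVneq (wval (aworld i)) w) => Hi //=.
  case Hsi: (`[< subsumes (aworld i) C D >]) => //.
  have Hn : b1 i by rewrite /b1 /s Hsi.
  have := @rep_b _ _ _ _ P b1 i0 w i Hi Hn.
  by rewrite /b1 /s Hs.
- case H: (hasw P w && `[< subsumes (aworld (rep s i0 w)) C D >]).
    rewrite ffunE [leRHS](bigID s) /= lerDl.
    by apply: sumr_ge0 => i _; exact: apr_ge0.
  rewrite big1 // => i /andP [/eqP Hi Hs].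
  have Hh : hasw P w by apply/existsP; exists i; rewrite Hi.
  have := @rep_b _ _ _ _ P s i0 w i Hi Hs.
  by move: H; rewrite Hh /= /s => ->.
Qed.
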